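(* Let $D$ be a Dyck path in the $n\times n$ lattice square and write the expansion of $LLT_D[X;1+q]$ in the elementary basis as $LLT_D[X;1+q]=\sum_{\mu\vdash n}P_\mu(q)\,e_\mu[X]$. Then $$\sum_{\mu\vdash n}P_\mu(q)=(1+q)^{\mathrm{dinv}(D)}.$$
   Context: A Dyck path $D$ in the $n\times n$ lattice square goes from $(0,0)$ to $(n,n)$ by unit North and East steps and stays weakly above the diagonal $y=x$. For $i=1,\dots,n$, let $a_i$ be the number of full lattice cells in row $i$ strictly between $D$ and the diagonal. A parking function $PF$ supported by $D$ is a bijective labeling of the $n$ cells immediately to the right of the North steps of $D$ by ''cars'' $1,\dots,n$, such that labels increase from bottom to top within each column. Let $c_i$ be the car in row $i$; it lies on diagonal $a_i$. A pair of rows $i<j$ contributes a primary dinv if $a_i=a_j$ and $c_i<c_j$, and a secondary dinv if $a_i=a_j+1$ and $c_i>c_j$. $\mathrm{dinv}(PF)$ is the total number of primary and secondary dinvs. The word $\sigma(PF)$ is the permutation obtained by reading the cars diagonal by diagonal, from the highest diagonal to the lowest, and within each diagonal from right to left. $\mathrm{pides}(PF)$ is the composition of $n$ encoding the descent set of $\sigma(PF)^{-1}$. $F_\alpha[X]$ is Gessel's fundamental quasisymmetric function indexed by the composition $\alpha$. The LLT polynomial of $D$ is $LLT_D[X;q]=\sum_{PF}q^{\mathrm{dinv}(PF)}F_{\mathrm{pides}(PF)}[X]$, summed over all parking functions supported by $D$; it is a symmetric function. $\mathrm{dinv}(D)$ is defined as $\mathrm{dinv}(PF)$ for the parking function $PF$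 supported by $D$ with $\sigma(PF)=n\cdots321$. *)

(* Defs.v *)
From HB Require Import structures.
From mathcomp Require Import all_boot all_order all_algebra all_fingroup.
From mathcomp Require Import mpoly.
Set Implicit Arguments. Unset Strict Implicit. Unset Printing Implicit Defensive.
Import Order.TTheory GRing.Theory.
Local Open Scope ring_scope.

(* A lattice path from (0,0) is a word in {N = true, E = false}. *)
Definition is_dyck (n : nat) (D : seq bool) : bool :=
  [&& size D == (2 * n)%N, count id D == n &
      all (fun k => count negb (take k D) <= count id (take k D))%N
          (iota 0 (size D).+1)].

Fixpoint nxs (D : seq bool) (e : nat) : seq nat :=
  match D with
  | [::] => [::]
  | true :: D' => e :: nxs D' e
  | false :: D' => nxs D' e.+1
  end.

(* Rows are indexed 0..n-1 (row j is the paper's row j+1, between y=j and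
   y=j+1).  xcol D j = column (x-coordinate) of the North step in row j, i.e.
   the column of the cell where the car of row j sits. *)
Definition xcol (n : nat) (D : seq bool) (j : 'I_n) : nat := nth 0%N (nxs D 0) j.

Definition area (n : nat) (D : seq bool) (j : 'I_n) : nat := (j - xcol D j)%N.

(* Cars 1..n are encoded as 0..n-1 (only their relative order matters);
   s j is the car in row j. *)
Definition isPF (n : nat) (D : seq bool) (s : {perm 'I_n}) : bool :=
  [forall j : 'I_n, forall k : 'I_n,
     ((j < k)%N && (xcol D j == xcol D k)) ==> (s j < s k)%N].

Definition dinv (n : nat) (D : seq bool) (c : 'I_n -> nat) : nat :=
  #|[set jk : 'I_n * 'I_n |
      (jk.1 < jk.2)%N &&
      (((area D jk.1 == area D jk.2) && (c jk.1 < c jk.2)%N) ||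
       ((area D jk.1 == (area D jk.2).+1) && (c jk.2 < c jk.1)%N))]|.

(* Position (0-based) of the cell of row j in the reading order: diagonals
   from highest to lowest, within a diagonal from right to left.  On a fixed
   diagonal a, the cell of row j is at x = j - a, so "right to left" means
   decreasing row index. *)
Definition readpos (n : nat) (D : seq bool) (j : 'I_n) : nat :=
  #|[set k : 'I_n | (area D j < area D k)%N ||
                    ((area D k == area D j) && (j < k)%N)]|.

(* sigma(PF)^{-1}: car |-> its position in the reading word sigma(PF).
   Here sigma(PF) at position readpos D j is the car s j, so the position of
   car i is readpos D (s^-1 i). *)
Definition sigma_inv (n : nat) (D : seq bool) (s : {perm 'I_n}) (i : 'I_n) : nat :=
  readpos D ((s^-1)%g i).

(* pides(PF), as the descent set of sigma^{-1}: i (0-based, meaning the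
   paper's i+1) is a descent iff sigma^{-1}(i) > sigma^{-1}(i+1). *)
Definition pides (n : nat) (D : seq bool) (s : {perm 'I_n}) : {set 'I_n} :=
  [set i : 'I_n | [exists k : 'I_n,
      (val k == (val i).+1) && (sigma_inv D s k < sigma_inv D s i)%N]].

(* Gessel's fundamental quasisymmetric function F_S, S a subset of
   {0,..,n-2} (descent set of the composition), in the n variables
   x_0..x_{n-1}:  sum over i_0 <= i_1 <= ... <= i_{n-1} with i_k < i_{k+1}
   whenever k is in S, of x_{i_0} ... x_{i_{n-1}}. *)
Definition Fund (n : nat) (R : ringType) (S : {set 'I_n}) : {mpoly R[n]} :=
  \sum_(f : {ffun 'I_n -> 'I_n} |
        [forall i : 'I_n, forall k : 'I_n, (val k == (val i).+1) ==>
           ((f i <= f k)%N && ((i \in S) ==> (f i < f k)%N))])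
     \prod_(i : 'I_n) 'X_(f i).

(* LLT_D[X;q] in n variables, coefficients in Z[q] (q = 'X). *)
Definition LLT (n : nat) (D : seq bool) : {mpoly {poly int}[n]} :=
  \sum_(s : {perm 'I_n} | isPF D s)
     ('X ^+ dinv D (fun j => val (s j))) *: Fund _ (pides D s).

Definition LLT1q (n : nat) (D : seq bool) : {mpoly {poly int}[n]} :=
  map_mpoly (fun p : {poly int} => p \Po (1 + 'X)) (LLT n D).

(* dinv(D) = dinv of the parking function PF_D with sigma(PF_D) = n...321,
   i.e. the car of row j is n-1-readpos D j (0-based cars): the first cell
   read gets the largest car, and so on. *)
Definition dinvD (n : nat) (D : seq bool) : nat :=
  dinv D (fun j : 'I_n => (n.-1 - readpos D j)%N).

(* Partitions of n, as weakly decreasing sequences lambda_0 >= ... >= lambda_{n-1}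
   >= 0 of length n (padded with zeros) summing to n. *)
Definition is_partition (n : nat) (mu : {ffun 'I_n -> 'I_n.+1}) : bool :=
  [forall i : 'I_n, forall k : 'I_n, (i <= k)%N ==> (mu k <= mu i)%N] &&
  ((\sum_(i : 'I_n) (mu i : nat))%N == n).

(* e_mu = prod_i e_{mu_i}, with e_0 = 1 (mesym n R 0 = 1). *)
Definition e_part (n : nat) (R : ringType) (mu : {ffun 'I_n -> 'I_n.+1}) : {mpoly R[n]} :=
  \prod_(i : 'I_n) mesym n R (mu i).

(* Main.v *)
Set Warnings "-all".
Require Import Defs.
From HB Require Import structures.
From mathcomp Require Import all_boot all_order all_algebra all_fingroup.
From mathcomp Require Import mpoly.
From mathcomp Require Import zify.
Import GRing.Theory.
Set Implicit Arguments. Unset Strict Implicit. Unset Printing Implicit Defensive.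
Lemma card_count (T : finType) (P : pred T) : #|[set x | P x]| = count P (enum T).
Proof. rewrite cardsE cardE /enum_mem size_filter /enum_mem count_filter; apply: eq_count => x; by rewrite /= !inE andbT. Qed.


Lemma sorted_map_enum n (T : Type) (r : rel T) (f : 'I_n -> T) :
  (forall p k : 'I_n, val k = (val p).+1 -> r (f p) (f k)) ->
  sorted r (map f (enum 'I_n)).
Proof.
case: n f => [|m] f H.
  by case: (enum 'I_0) (size_enum_ord 0) => // ? ?.
apply/(sortedP (f ord0)) => i; rewrite size_map size_enum_ord => hi.
have hi' : i < m.+1 by apply: ltnW.
have h1 : i < size (enum 'I_m.+1) by rewrite size_enum_ord.
have h2 : i.+1 < size (enum 'I_m.+1) by rewrite size_enum_ord.
rewrite (nth_map ord0 _ _ h1) (nth_map ord0 _ _ h2).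
by apply: H; rewrite /= !nth_enum_ord.
Qed.

Lemma mono_uniq n (r : rel 'I_n) (f g : 'I_n -> 'I_n) :
  transitive r -> antisymmetric r ->
  (forall p k : 'I_n, val k = (val p).+1 -> r (f p) (f k)) ->
  (forall p k : 'I_n, val k = (val p).+1 -> r (g p) (g k)) ->
  (forall j, #|[set p | f p == j]| = #|[set p | g p == j]|) -> f =1 g.
Proof.
move=> tr asy Hf Hg Hc.
have e : map f (enum 'I_n) = map g (enum 'I_n).
  apply: (sorted_eq tr asy); try exact: sorted_map_enum.
  apply/allP => x _; rewrite /= !count_map.
  by have := Hc x; rewrite !card_count !enumT => e; apply/eqP; exact: e.
move=> p; have := congr1 (nth (f p) ^~ p) e.
have hp : p < size (enum 'I_n) by rewrite size_enum_ord.
by rewrite (nth_map p _ _ hp) (nth_map p _ _ hp) !nth_ord_enum.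
Qed.

Local Open Scope ring_scope.
Local Notation R := {poly int}.

Section LF.
Variable n : nat.
Implicit Types (S B : {set 'I_n}).

Definition Uset : {set 'I_n} := [set i : 'I_n | (i.+1 < n)%N].

Definition gB (B : {set 'I_n}) (p : nat) : nat :=
  count (fun t => t \in [seq val x | x in B]) (iota 0 p).

Lemma gB_lt B (p : 'I_n) : (gB B p < n)%N.
Proof. by apply: leq_ltn_trans (ltn_ord p); rewrite /gB (leq_trans (count_size _ _)) // size_iota. Qed.

Lemma gB_step B (p : nat) : gB B p.+1 = (gB B p + (p \in [seq val x | x in B]))%N.
Proof. by rewrite /gB -addn1 iotaD count_cat /= addn0. Qed.

Lemma memvB (B : {set 'I_n}) (p : 'I_n) : (val p \in [seq val x | x in B]) = (p \in B).
Proof. by rewrite mem_map ?mem_enum //; exact: val_inj. Qed.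

Definition gBf (B : {set 'I_n}) : {ffun 'I_n -> 'I_n} := [ffun p => Ordinal (gB_lt B p)].

Definition mf (f : 'I_n -> 'I_n) : 'X_{1..n} := (\sum_(p : 'I_n) U_(f p))%MM.

Lemma mfE f j : mf f j = #|[set p | f p == j]|.
Proof.
rewrite /mf mnm_sumE -sum1_card [in RHS]big_mkcond /=; apply: eq_bigr => p _.
by rewrite mnm1E inE; case: eqP.
Qed.

Definition validS (S : {set 'I_n}) (f : {ffun 'I_n -> 'I_n}) : bool :=
  [forall i : 'I_n, forall k : 'I_n, (val k == (val i).+1) ==>
           ((f i <= f k)%N && ((i \in S) ==> (f i < f k)%N))].

Lemma FundE S : Fund R S = \sum_(f | validS S f) 'X_[mf f].
Proof.
rewrite /Fund; apply: eq_bigr => f _.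
by rewrite /mf (big_morph (fun m => 'X_[m]) (@mpolyXD _ _) (@mpolyX0 _ _)).
Qed.

Definition Lf (F : {mpoly R[n]}) : R :=
  \sum_(B : {set 'I_n} | B \subset Uset) (-1) ^+ #|B| * F@_(mf (gBf B)).

Lemma validS_mono S f : validS S f ->
  forall p k : 'I_n, val k = (val p).+1 -> (f p <= f k)%N.
Proof. by move=> /forallP H p k e; have /forallP/(_ k) := H p; rewrite e eqxx /= => /andP[]. Qed.

Lemma gBf_step B (p k : 'I_n) : val k = (val p).+1 -> val (gBf B k) = (val (gBf B p) + (p \in B))%N.
Proof. by move=> e; rewrite !ffunE /= e gB_step memvB. Qed.

Lemma ord_trans : transitive (fun a b : 'I_n => (a <= b)%N).
Proof. by move=> a b c; apply: leq_trans. Qed.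
Lemma ord_asym : antisymmetric (fun a b : 'I_n => (a <= b)%N).
Proof. by move=> a b /anti_leq /val_inj. Qed.

Lemma coef_Fund S B : (Fund R S)@_(mf (gBf B)) = (validS S (gBf B))%:R.
Proof.
rewrite FundE raddf_sum /=.
have E f : validS S f -> (mf f == mf (gBf B)) = (f == gBf B).
  move=> Vf; apply/eqP/eqP => [e|-> //]; apply/ffunP.
  apply: (@mono_uniq n _ f (gBf B) ord_trans ord_asym); first exact: validS_mono Vf.
    by move=> p k e'; rewrite (gBf_step B e') leq_addr.
  by move=> j; rewrite -!mfE e.
case V: (validS S (gBf B)).
  rewrite (bigD1 (gBf B)) //= mcoeffX eqxx big1 ?addr0 // => f /andP[Vf ne].
  by rewrite mcoeffX E // (negbTE ne).
rewrite big1 // => f Vf; rewrite mcoeffX E //; case: eqP => // ef.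
by move: V; rewrite -ef Vf.
Qed.

Lemma validS_gB S B : S \subset Uset -> validS S (gBf B) = (S \subset B).
Proof.
move=> SU; apply/forallP/subsetP => [H i iS|H i].
  have iU := subsetP SU i iS; rewrite inE in iU.
  have /forallP/(_ (Ordinal iU)) := H i; rewrite /= eqxx /= (gBf_step B (p:=i) (k:=Ordinal iU)) //.
  by rewrite leq_addr iS /= -{1}[val (gBf B i)]addn0 ltn_add2l; case: (i \in B).
apply/forallP => k; apply/implyP => /eqP e; rewrite (gBf_step B e) leq_addr /=.
by apply/implyP => /H ->; rewrite addn1.
Qed.

Lemma mobius_int S x : x \in Uset -> x \notin S ->
  (\sum_(B : {set 'I_n} | (B \subset Uset) && (S \subset B)) (-1) ^+ #|B| : int) = 0.
Proof.
move=> xU xS.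
pose tog B := if x \in B then B :\ x else x |: B.
have togK : involutive tog.
  move=> B; rewrite /tog; case xB: (x \in B).
    by rewrite setD11 setD1K.
  by rewrite setU11 setU1K ?xB.
have memt B y : y != x -> (y \in tog B) = (y \in B).
  by move=> ne; rewrite /tog; case: (x \in B); rewrite !inE (negbTE ne).
have P1 B : (tog B \subset Uset) = (B \subset Uset).
  apply/subsetP/subsetP => H y; (case: (eqVneq y x) => [-> //|ne]);
    [rewrite -(memt B y ne) | rewrite (memt B y ne)]; exact: H.
have P2 B : (S \subset tog B) = (S \subset B).
  apply/subsetP/subsetP => H y yS; (case: (eqVneq y x) => [e|ne]);
    try (by move: yS; rewrite e (negbTE xS));
    [rewrite -(memt B y ne) | rewrite (memt B y ne)]; exact: H.
have sg B : ((-1) ^+ #|tog B| : int) = - (-1) ^+ #|B|.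
  rewrite /tog; case xB: (x \in B).
    by rewrite [in RHS](cardsD1 x) xB exprS mulN1r opprK.
  by rewrite cardsU1 xB exprS mulN1r.
set s := (\sum_(B | _) _).
have : s = - s.
  rewrite {1}/s (reindex_inj (can_inj togK)) /= -sumrN.
  by apply: eq_big => B; rewrite ?P1 ?P2 // => _; rewrite sg.
by move=> e; apply/eqP; rewrite -(eqr_opp) ; apply/eqP; lia.
Qed.

Lemma L_Fund S : S \subset Uset -> Lf (Fund R S) = (-1) ^+ #|Uset| * (S == Uset)%:R.
Proof.
move=> SU; rewrite /Lf.
under eq_bigr => B _ do rewrite coef_Fund validS_gB //.
case: (eqVneq S Uset) => [->|neS].
  rewrite (bigD1 Uset) //= subxx mulr1 big1 ?addr0 ?mulr1 // => B /andP[BU ne].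
  suff -> : (Uset \subset B) = false by rewrite mulr0.
  by apply/negbTE; apply: contra ne => UB; rewrite eqEsubset BU UB.
have [x xU xS] : exists2 x, x \in Uset & x \notin S.
  have : S \proper Uset by rewrite properEneq neS SU.
  by case/properP.
rewrite mulr0 -[RHS](mulr0z (1 : R)) -(mobius_int xU xS) rmorph_sum /=.
rewrite big_mkcondr /=; apply: eq_bigr => B _.
by case: (S \subset B); rewrite ?mulr1 ?mulr0 ?rmorph_sign.
Qed.

Lemma LfD F G : Lf (F + G) = Lf F + Lf G.
Proof. by rewrite /Lf -big_split; apply: eq_bigr => B _; rewrite mcoeffD mulrDr. Qed.
Lemma Lf0 : Lf 0 = 0.
Proof. by rewrite /Lf big1 // => B _; rewrite mcoeff0 mulr0. Qed.
Lemma Lf_sum I (r : seq I) (P : pred I) (F : I -> {mpoly R[n]}) :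
  Lf (\sum_(i <- r | P i) F i) = \sum_(i <- r | P i) Lf (F i).
Proof. exact: (big_morph Lf LfD Lf0). Qed.
Lemma LfZ c F : Lf (c *: F) = c * Lf F.
Proof. by rewrite /Lf mulr_sumr; apply: eq_bigr => B _; rewrite mcoeffZ mulrCA. Qed.

Lemma Lf_map F : Lf (map_mpoly (fun p : R => p \Po (1 + 'X)) F) = Lf F \Po (1 + 'X).
Proof.
rewrite /Lf (raddf_sum (comp_poly (1 + 'X))); apply: eq_bigr => B _.
rewrite mcoeff_map_mpoly -signr_odd !mulr_sign.
by case: odd; rewrite ?raddfN.
Qed.
End LF.

Lemma map_nth_enum n (T : Type) (d : 'I_n -> T) (s : seq T) : size s = n ->
  map (fun p : 'I_n => nth (d p) s p) (enum 'I_n) = s.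
Proof.
case: s => [|a s] hs.
  have : size (enum 'I_n) = 0 by rewrite size_enum_ord -hs.
  by move/size0nil ->.
apply: (eq_from_nth (x0 := a)); first by rewrite size_map size_enum_ord.
move=> i; rewrite size_map size_enum_ord => hi.
have hi' : (i < size (enum 'I_n))%N by rewrite size_enum_ord.
rewrite (nth_map (Ordinal hi) _ _ hi') /= nth_enum_ord //.
by apply: set_nth_default; rewrite hs.
Qed.

Lemma card_nth n (T : Type) (d : 'I_n -> T) (s : seq T) (P : pred T) : size s = n ->
  #|[set p : 'I_n | P (nth (d p) s p)]| = count P s.
Proof.
move=> hs; rewrite card_count -{2}(map_nth_enum d hs) count_map.
by apply: eq_count.
Qed.

Arguments Uset {n}.

Section ES.
Variable n : nat.
Variable mu : 'I_n -> nat.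
Local Notation word := {ffun 'I_n -> 'I_n}.
Implicit Types (w f : word) (H : {ffun 'I_n -> {set 'I_n}}).

Definition content w := [forall i, #|[set p | w p == i]| == mu i].
Definition NA w : {set 'I_n} :=
  [set i | [exists k : 'I_n, (val k == (val i).+1) && (w k <= w i)%N]].
Definition Qx (x : word * word) := content x.1 && validS (NA x.1) x.2.
Definition PH H := [forall i, #|H i| == mu i].
Definition XH H : {mpoly R[n]} := \prod_i \prod_(j in H i) 'X_j.
Definition Phi (x : word * word) : {ffun 'I_n -> {set 'I_n}} :=
  [ffun i => x.2 @: [set p | x.1 p == i]].
Definition lexle (a b : 'I_n * 'I_n) :=
  ((a.2 < b.2)%N || ((a.2 == b.2) && (a.1 <= b.1)%N)).
Definition lexlt (a b : 'I_n * 'I_n) :=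
  ((a.2 < b.2)%N || ((a.2 == b.2) && (a.1 < b.1)%N)).
Definition EH H : {set 'I_n * 'I_n} := [set ij | ij.2 \in H ij.1].
Definition sH H := sort lexle (enum (EH H)).
Definition Psi H : word * word :=
  ([ffun p => (nth (p, p) (sH H) p).1], [ffun p => (nth (p, p) (sH H) p).2]).
Definition tx (x : word * word) := [seq (x.1 p, x.2 p) | p <- enum 'I_n].

Lemma lexle_trans : transitive lexle.
Proof.
move=> b a c; rewrite /lexle.
case/orP=> [h1|/andP[/eqP e1 h1]]; case/orP=> [h2|/andP[/eqP e2 h2]].
- by rewrite (ltn_trans h1 h2).
- by rewrite -e2 h1.
- by rewrite e1 h2.
- by rewrite e1 e2 eqxx (leq_trans h1 h2) orbT.
Qed.
Lemma lexle_asym : antisymmetric lexle.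
Proof.
move=> [a1 a2] [b1 b2]; rewrite /lexle /= => /andP[h1 h2].
case/orP: h1 => [l1|/andP[/eqP e1 l1]]; case/orP: h2 => [l2|/andP[/eqP e2 l2]].
- by move: (ltn_trans l1 l2); rewrite ltnn.
- by move: l1; rewrite e2 ltnn.
- by move: l2; rewrite e1 ltnn.
- by rewrite e1; congr pair; apply/val_inj/anti_leq; rewrite l1 l2.
Qed.
Lemma lexle_total : total lexle.
Proof.
move=> [a1 a2] [b1 b2]; rewrite /lexle /=.
case: (ltngtP a2 b2) => [h|h|e]; rewrite ?h ?orbT //.
have -> : a2 = b2 by apply: val_inj.
by rewrite eqxx /=; exact: leq_total.
Qed.
Lemma lexlt_trans : transitive lexlt.
Proof.
move=> b a c; rewrite /lexlt.
case/orP=> [h1|/andP[/eqP e1 h1]]; case/orP=> [h2|/andP[/eqP e2 h2]].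
- by rewrite (ltn_trans h1 h2).
- by rewrite -e2 h1.
- by rewrite e1 h2.
- by rewrite e1 e2 eqxx (ltn_trans h1 h2) orbT.
Qed.
Lemma lexlt_irr : irreflexive lexlt.
Proof. by move=> a; rewrite /lexlt ltnn eqxx ltnn. Qed.
Lemma lexltW a b : lexlt a b -> lexle a b.
Proof. by rewrite /lexlt /lexle => /orP[->//|/andP[-> /ltnW ->]]; rewrite orbT. Qed.
Lemma lexle_neq a b : lexle a b -> a != b -> lexlt a b.
Proof.
case: a b => [a1 a2] [b1 b2]; rewrite /lexle /lexlt /= => /orP[->//|/andP[/eqP e h]] ne.
subst; rewrite ltnn eqxx /= ltn_neqAle h andbT.
by apply: contra ne => /eqP e'; have -> : a1 = b1 by apply: val_inj.
Qed.

Lemma NA_succ w (p k : 'I_n) : val k = (val p).+1 -> (p \in NA w) = (w k <= w p)%N.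
Proof.
move=> e; rewrite inE; apply/existsP/idP => [[k' /andP[/eqP e' h]]|h].
  by have -> : k = k' by apply: val_inj; rewrite e e'.
by exists k; rewrite e eqxx.
Qed.

Lemma Qx_step (x : word * word) (p k : 'I_n) : Qx x -> val k = (val p).+1 ->
  lexlt (x.1 p, x.2 p) (x.1 k, x.2 k).
Proof.
move=> /andP[_ /forallP/(_ p)/forallP/(_ k)] H e; move: H.
rewrite e eqxx /= (NA_succ _ e) => /andP[le lt].
rewrite /lexlt /=; case: (ltngtP (x.2 p) (x.2 k)) => [//|gt|eq2].
  by move: le; rewrite leqNgt gt.
have e2 : x.2 p = x.2 k by apply: val_inj.
rewrite e2 eqxx /= ltnNge; apply/negP => h.
by move: (implyP lt h); rewrite e2 ltnn.
Qed.

Lemma tx_sorted x : Qx x -> sorted lexlt (tx x).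
Proof. by move=> Q; apply: sorted_map_enum => p k e; exact: Qx_step. Qed.

Lemma tx_uniq x : Qx x -> uniq (tx x).
Proof. by move=> Q; apply: (sorted_uniq lexlt_trans lexlt_irr); exact: tx_sorted. Qed.

Lemma tx_sortedle x : Qx x -> sorted lexle (tx x).
Proof. by move=> Q; apply: (sub_sorted lexltW); exact: tx_sorted. Qed.

Lemma tx_inj x : Qx x -> injective (fun p => (x.1 p, x.2 p)).
Proof.
move=> Q p q e; have := tx_uniq Q; rewrite /tx => U.
have hp : (p < size (enum 'I_n))%N by rewrite size_enum_ord.
have hq : (q < size (enum 'I_n))%N by rewrite size_enum_ord.
have := nth_uniq (x.1 p, x.2 p) _ _ U; rewrite size_map => /(_ p q hp hq).
rewrite (nth_map p _ _ hp) (nth_map p _ _ hq) !nth_ord_enum e eqxx.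
by move/esym/eqP/val_inj.
Qed.

Lemma fiber_inj x i : Qx x -> {in [set p | x.1 p == i] &, injective x.2}.
Proof.
move=> Q p q; rewrite !inE => /eqP hp /eqP hq e; apply: (tx_inj Q).
by rewrite /= hp hq e.
Qed.

Lemma PH_Phi x : Qx x -> PH (Phi x).
Proof.
move=> Q; apply/forallP => i; rewrite ffunE card_in_imset; last exact: fiber_inj.
by case/andP: Q => /forallP/(_ i).
Qed.

Lemma XH_Phi x : Qx x -> XH (Phi x) = 'X_[mf x.2].
Proof.
move=> Q; rewrite /XH.
under eq_bigr => i _ do rewrite ffunE (big_imset _ (fiber_inj (i:=i) Q)) /=.
transitivity (\prod_p ('X_(x.2 p) : {mpoly R[n]})).
  rewrite [RHS](partition_big (fun p => x.1 p) predT) //=.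
  by apply: eq_bigr => i _; apply: eq_bigl => p; rewrite inE.
by rewrite /mf (big_morph (fun m => 'X_[m]) (@mpolyXD _ _) (@mpolyX0 _ _)).
Qed.

Lemma EH_Phi_mem x ij : (ij \in EH (Phi x)) = (ij \in tx x).
Proof.
rewrite inE ffunE; apply/imsetP/mapP => [[p]|[p _ ->]].
  rewrite inE => /eqP hp e; exists p; rewrite ?mem_enum //.
  by case: ij hp e => a b /= -> ->.
by exists p; rewrite ?inE /=.
Qed.

Lemma sH_Phi x : Qx x -> sH (Phi x) = tx x.
Proof.
move=> Q; rewrite /sH; apply: (sorted_eq lexle_trans lexle_asym).
- by apply: sort_sorted; exact: lexle_total.
- exact: tx_sortedle.
rewrite perm_sort; apply: uniq_perm; [exact: enum_uniq | exact: tx_uniq |].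
by move=> ij; rewrite mem_enum EH_Phi_mem.
Qed.

Lemma Psi_Phi x : Qx x -> Psi (Phi x) = x.
Proof.
move=> Q; rewrite /Psi (sH_Phi Q); case: x Q => w f Q /=.
congr pair; apply/ffunP => p; rewrite ffunE /tx;
  have hp : (p < size (enum 'I_n))%N by rewrite size_enum_ord.
  by rewrite (nth_map p _ _ hp) nth_ord_enum.
by rewrite (nth_map p _ _ hp) nth_ord_enum.
Qed.

Lemma card_EH H : #|EH H| = (\sum_i #|H i|)%N.
Proof.
rewrite [RHS](eq_bigr (fun i => \sum_(j in H i) 1)%N); last by move=> i _; rewrite sum1_card.
rewrite (pair_big_dep predT (fun i j => j \in H i)) /= sum1dep_card.
by apply: eq_card => ij; rewrite !inE.
Qed.

Lemma mem_sH H ij : (ij \in sH H) = (ij \in EH H).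
Proof. by rewrite mem_sort mem_enum. Qed.

Lemma uniq_sH H : uniq (sH H).
Proof. by rewrite sort_uniq enum_uniq. Qed.

Hypothesis smu : (\sum_i mu i)%N = n.

Lemma size_sH H : PH H -> size (sH H) = n.
Proof.
move=> P; rewrite size_sort -cardE card_EH; rewrite -[in RHS]smu; apply: eq_bigr => i _.
by apply/eqP; move/forallP: P.
Qed.

Lemma nth_sH_inj H (p q : 'I_n) : PH H ->
  nth (p, p) (sH H) p = nth (q, q) (sH H) q -> p = q.
Proof.
move=> P; have hs := size_sH P.
rewrite [RHS](set_nth_default (p, p)) ?hs // => e.
apply: val_inj; apply/eqP; rewrite -(nth_uniq (p, p) _ _ (uniq_sH H)) ?hs ?ltn_ord //.
by rewrite e.
Qed.

Lemma Phi_Psi H : PH H -> Phi (Psi H) = H.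
Proof.
move=> P; apply/ffunP => i; rewrite ffunE; apply/setP => j; rewrite /Psi /=.
have hs := size_sH P.
apply/imsetP/idP => [[p]|jH].
  rewrite inE ffunE => /eqP hp ->; rewrite ffunE.
  have : nth (p, p) (sH H) p \in EH H by rewrite -mem_sH mem_nth // hs.
  by rewrite inE hp.
have ijs : (i, j) \in sH H by rewrite mem_sH inE.
have hi : (index (i, j) (sH H) < n)%N by rewrite -[in X in (_ < X)%N]hs index_mem.
exists (Ordinal hi); rewrite ?inE !ffunE /= nth_index //.
Qed.

Lemma lexlt_valid (w f : word) (p k : 'I_n) : val k = (val p).+1 ->
  lexlt (w p, f p) (w k, f k) ->
  (f p <= f k)%N && ((p \in NA w) ==> (f p < f k)%N).
Proof.
move=> e; rewrite (NA_succ _ e) /lexlt /= => /orP[h|/andP[/eqP e2 h]].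
  by rewrite (ltnW h) h implybT.
rewrite e2 leqnn /=; apply/implyP => h'.
by move: (leq_trans h h'); rewrite ltnn.
Qed.

Lemma Q_Psi H : PH H -> Qx (Psi H).
Proof.
move=> P; have hs := size_sH P; apply/andP; split.
  apply/forallP => i; rewrite -(eqP (forallP P i)) -{2}(Phi_Psi P) ffunE.
  rewrite card_in_imset //= => p q; rewrite !inE !ffunE => /eqP hp /eqP hq e.
  apply: (nth_sH_inj P); rewrite [LHS]surjective_pairing [RHS]surjective_pairing.
  by rewrite hp hq e.
apply/forallP => p; apply/forallP => k; apply/implyP => /eqP e.
apply: lexlt_valid => //; rewrite /Psi /= !ffunE -!surjective_pairing.
have hk : (p.+1 < size (sH H))%N by rewrite hs -e ltn_ord.
rewrite (set_nth_default (p, p) (k, k)) ?e //.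
apply: lexle_neq.
  have /sortedP := sort_sorted lexle_total (enum (EH H)).
  by move=> /(_ (p, p) p hk).
have hp : (p < size (sH H))%N by rewrite hs ltn_ord.
by rewrite (nth_uniq (p, p) hp hk (uniq_sH H)) eqn_leq ltnn andbF.
Qed.

Lemma Qx_iff x : PH (Phi x) && (Psi (Phi x) == x) = Qx x.
Proof.
apply/andP/idP => [[P /eqP e]|Q]; first by rewrite -e; exact: Q_Psi.
by rewrite PH_Phi // Psi_Phi // eqxx.
Qed.

Lemma e_expand :
  \prod_i mesym n R (mu i) = \sum_(w | content w) Fund R (NA w).
Proof.
rewrite /mesym bigA_distr_big_dep.
transitivity (\sum_(H | PH H) XH H).
  by apply: eq_bigl => H; apply/familyP/forallP => h i; exact: (h i).
rewrite (reindex_onto Phi Psi Phi_Psi).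
under eq_bigl => x do rewrite Qx_iff.
under eq_bigr => x Q do rewrite XH_Phi //.
under [RHS]eq_bigr => w _ do rewrite FundE.
by rewrite pair_big_dep.
Qed.
End ES.

Section ES2.
Variable n : nat.
Variable mu : 'I_n -> nat.
Hypothesis smu : (\sum_i mu i)%N = n.
Local Notation word := {ffun 'I_n -> 'I_n}.

Lemma NA_sub (w : word) : NA w \subset Uset.
Proof.
apply/subsetP => i; rewrite !inE => /existsP[k /andP[/eqP e _]].
by rewrite -e ltn_ord.
Qed.

Definition geo (a b : 'I_n) := (b <= a)%N.
Lemma geo_trans : transitive geo.
Proof. by move=> b a c h1 h2; rewrite /geo (leq_trans h2 h1). Qed.
Lemma geo_asym : antisymmetric geo.
Proof. by move=> a b /andP[h1 h2]; apply/val_inj/anti_leq; rewrite /geo in h1 h2; rewrite h1 h2. Qed.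
Lemma geo_total : total geo.
Proof. by move=> a b; rewrite /geo leq_total. Qed.

Definition s0 := sort geo (flatten [seq nseq (mu i) i | i <- enum 'I_n]).
Definition w0 : word := [ffun p => nth p s0 p].

Lemma size_s0 : size s0 = n.
Proof.
rewrite size_sort size_flatten /shape -map_comp sumnE big_map.
rewrite -[RHS]smu big_enum /=; apply: eq_bigr => i _; exact: size_nseq.
Qed.

Lemma count_s0 i : count_mem i s0 = mu i.
Proof.
have pe : perm_eq s0 (flatten [seq nseq (mu i) i | i <- enum 'I_n]) by rewrite /s0 perm_sort.
move/seq.permP: pe => ->; rewrite count_flatten -map_comp sumnE big_map.
rewrite big_enum /= (bigD1 i) //= count_nseq /= eqxx mul1n big1 ?addn0 //.
by move=> j ne; rewrite count_nseq /=; move: ne; rewrite eq_sym => /negbTE ->.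
Qed.

Lemma content_w0 : content mu w0.
Proof.
apply/forallP => i; apply/eqP.
under eq_finset => p do rewrite ffunE.
by rewrite (card_nth (fun p => p) (pred1 i) size_s0) count_s0.
Qed.

Lemma w0_step (p k : 'I_n) : val k = (val p).+1 -> (w0 k <= w0 p)%N.
Proof.
move=> e; rewrite !ffunE.
have hk : (p.+1 < size s0)%N by rewrite size_s0 -e ltn_ord.
rewrite (set_nth_default p k) ?e //.
have /sortedP := sort_sorted geo_total (flatten [seq nseq (mu i) i | i <- enum 'I_n]).
by move=> /(_ p p hk).
Qed.

Lemma NA_w0 : NA w0 = Uset.
Proof.
apply/eqP; rewrite eqEsubset NA_sub /=; apply/subsetP => i; rewrite inE => hi.
by rewrite (NA_succ _ (k := Ordinal hi)) //; apply: w0_step.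
Qed.

Lemma uniq_w0 (w : word) : content mu w -> NA w = Uset -> w = w0.
Proof.
move=> C N; apply/ffunP; apply: (@mono_uniq n geo w w0 geo_trans geo_asym).
- move=> p k e; have : p \in NA w by rewrite N inE -e ltn_ord.
  by rewrite (NA_succ _ e).
- by move=> p k e; apply: w0_step.
move=> j; rewrite (eqP (forallP C j)); have := forallP content_w0 j.
by move/eqP.
Qed.

Lemma count_w : #|[set w : word | content mu w && (NA w == Uset)]| = 1%N.
Proof.
rewrite -(cards1 w0); apply: eq_card => w; rewrite !inE.
apply/andP/eqP => [[C /eqP N]|->]; first exact: uniq_w0.
by rewrite content_w0 NA_w0 eqxx.
Qed.

Lemma L_e : Lf (\prod_i mesym n R (mu i)) = (-1) ^+ #|@Uset n|.
Proof.
rewrite (e_expand smu) Lf_sum.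
under eq_bigr => w _ do rewrite L_Fund ?NA_sub //.
rewrite -mulr_sumr -[RHS]mulr1; congr (_ * _).
rewrite -natr_sum -[RHS]/(1%:R) -count_w -sum1dep_card.
by rewrite big_mkcondr /=; congr (_ %:R); apply: eq_bigr => w _; case: (NA w == Uset).
Qed.
End ES2.

Section LLTs.
Variable n : nat.
Variable D : seq bool.
Implicit Types (j k : 'I_n).

Definition rb (k j : 'I_n) := (area D j < area D k)%N || ((area D k == area D j) && (j < k)%N).

Lemma readposE j : readpos D j = #|[set k | rb k j]|.
Proof. by []. Qed.

Lemma rb_irr j : rb j j = false.
Proof. by rewrite /rb ltnn eqxx ltnn. Qed.

Lemma rb_trans a b c : rb a b -> rb b c -> rb a c.
Proof.
rewrite /rb => /orP[h1|/andP[/eqP e1 h1]] /orP[h2|/andP[/eqP e2 h2]].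
- by rewrite (ltn_trans h2 h1).
- by rewrite -e2 h1.
- by rewrite e1 h2.
- by rewrite e1 e2 eqxx (ltn_trans h2 h1) orbT.
Qed.

Lemma rb_total j k : j != k -> rb j k || rb k j.
Proof.
move=> ne; rewrite /rb; case: (ltngtP (area D k) (area D j)) => [h|h|e]; rewrite ?h ?orbT //=.
case: (ltngtP j k) => [h|h|e2]; rewrite ?h ?orbT //.
by move: ne; rewrite (val_inj e2) eqxx.
Qed.

Lemma readpos_lt_rb j k : rb k j -> (readpos D k < readpos D j)%N.
Proof.
move=> h; rewrite !readposE; apply: proper_card; apply/properP; split.
  by apply/subsetP => l; rewrite !inE => h'; exact: rb_trans h' h.
by exists k; rewrite !inE ?h ?rb_irr.
Qed.

Lemma readpos_inj : injective (@readpos n D).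
Proof.
move=> j k e; apply/eqP; apply: contraT => ne.
case/orP: (rb_total ne) => /readpos_lt_rb; rewrite e ltnn //.
Qed.

Lemma readpos_lt j : (readpos D j < n)%N.
Proof.
rewrite readposE -[X in (_ < X)%N]card_ord -cardsT; apply: proper_card; apply/properP; split.
  exact: subsetT.
by exists j; rewrite !inE ?rb_irr.
Qed.

Lemma rp_ord j : (n.-1 - readpos D j < n)%N.
Proof. by have := ltn_ord j; lia. Qed.

Definition f0 (j : 'I_n) : 'I_n := Ordinal (rp_ord j).

Lemma f0_inj : injective f0.
Proof.
move=> j k /(congr1 val) /= e; apply: readpos_inj.
by have := readpos_lt j; have := readpos_lt k; lia.
Qed.

Definition pf0 : {perm 'I_n} := perm f0_inj.

Lemma pf0E j : nat_of_ord (pf0 j) = (n.-1 - readpos D j)%N.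
Proof. by rewrite permE. Qed.

Lemma isPF_pf0 : isPF D pf0.
Proof.
apply/forallP => j; apply/forallP => k; apply/implyP => /andP[jk /eqP ex].
have : rb k j.
  have le : (area D j <= area D k)%N by rewrite /area ex; apply: leq_sub2r; exact: ltnW.
  rewrite /rb; move: le; rewrite leq_eqVlt => /orP[/eqP ->|->//].
  by rewrite eqxx jk orbT.
move/readpos_lt_rb => h; rewrite !pf0E.
by have := readpos_lt j; have := readpos_lt k; lia.
Qed.

Lemma sigma_pf0 i : sigma_inv D pf0 i = (n.-1 - i)%N.
Proof.
rewrite /sigma_inv; set j := (pf0^-1)%g i.
have : nat_of_ord (pf0 j) = nat_of_ord i by rewrite /j permKV.
by rewrite pf0E; have := readpos_lt j; have := ltn_ord i; lia.
Qed.

Lemma pides_pf0 : pides D pf0 = Uset.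
Proof.
apply/eqP; rewrite eqEsubset; apply/andP; split; apply/subsetP => i; rewrite !inE.
  by case/existsP => k /andP[/eqP e _]; rewrite -e ltn_ord.
move=> h; apply/existsP; exists (Ordinal h); rewrite /= eqxx /= !sigma_pf0 /=.
by have := ltn_ord i; lia.
Qed.

Lemma pides_sub (s : {perm 'I_n}) : pides D s \subset Uset.
Proof.
by apply/subsetP => i; rewrite !inE => /existsP[k /andP[/eqP e _]]; rewrite -e ltn_ord.
Qed.

Lemma pides_uniq (s : {perm 'I_n}) : pides D s = Uset -> s = pf0.
Proof.
move=> Ps; set h := sigma_inv D s.
have hlt i : (h i < n)%N by rewrite /h /sigma_inv readpos_lt.
have step (i k : 'I_n) : val k = i.+1 -> (h k < h i)%N.
  move=> e; have : i \in pides D s by rewrite Ps inE -e ltn_ord.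
  rewrite inE => /existsP[k' /andP[/eqP e' lt]].
  by have -> : k = k' by apply: val_inj; rewrite e e'.
have A d : forall i : 'I_n, (i + d)%N = n.-1 -> (d <= h i)%N.
  elim: d => [//|d IH] i e.
  have hk : (i.+1 < n)%N by have := ltn_ord i; lia.
  have := IH (Ordinal hk); rewrite /= => /(_ ltac:(lia)) le.
  by apply: leq_ltn_trans le (step i (Ordinal hk) erefl).
have B d : forall i : 'I_n, nat_of_ord i = d -> (h i <= n.-1 - d)%N.
  elim: d => [|d IH] i e; first by have := hlt i; lia.
  have hp : (d < n)%N by have := ltn_ord i; lia.
  have := IH (Ordinal hp) erefl; have := step (Ordinal hp) i e; lia.
have hE i : h i = (n.-1 - i)%N.
  apply/eqP; rewrite eqn_leq B //= A //; have := ltn_ord i; lia.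
apply/permP => j; apply: val_inj; rewrite /= pf0E.
have := hE (s j); rewrite /h /sigma_inv permK; have := ltn_ord (s j); lia.
Qed.

Lemma dinv_ext (c1 c2 : 'I_n -> nat) : c1 =1 c2 -> dinv D c1 = dinv D c2.
Proof. by move=> e; rewrite /dinv; apply: eq_card => jk; rewrite !inE !e. Qed.

Lemma L_LLT : Lf (LLT n D) = (-1) ^+ #|@Uset n| * 'X ^+ dinvD n D.
Proof.
rewrite /LLT Lf_sum.
under eq_bigr => s _ do rewrite LfZ L_Fund ?pides_sub //.
rewrite (bigD1 pf0) ?isPF_pf0 //= pides_pf0 eqxx mulr1 big1 ?addr0.
  rewrite mulrC; congr (_ * _ ^+ _); apply: dinv_ext => j; exact: pf0E.
move=> s /andP[_ ne]; case: eqP => [/pides_uniq e|]; last by rewrite mulr0 mulr0.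
by move: ne; rewrite e eqxx.
Qed.
End LLTs.

Unset Implicit Arguments.
Theorem proposition3p1 (n : nat) (D : seq bool)
    (P : {ffun 'I_n -> 'I_n.+1} -> {poly int}) :
  is_dyck n D ->
  LLT1q n D = \sum_(mu | is_partition mu) P mu *: e_part _ mu ->
  \sum_(mu | is_partition mu) P mu = (1 + 'X) ^+ dinvD n D.
Proof.
move=> _ HL.
have := congr1 (@Lf n) HL.
rewrite /LLT1q Lf_map L_LLT Lf_sum.
rewrite (eq_bigr (fun mu => P mu * (-1) ^+ #|@Uset n|)); last first.
  move=> mu /andP[_ /eqP smu]; rewrite LfZ /e_part.
  by rewrite (@L_e n (fun i => nat_of_ord (mu i))).
rewrite -mulr_suml rmorphM rmorph_sign rmorphXn /= comp_polyX => e.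
have s2 : ((-1) ^+ #|@Uset n| * (-1) ^+ #|@Uset n| : {poly int}) = 1.
  by have := signrMK #|@Uset n| (1 : {poly int}); rewrite mulr1.
transitivity ((\sum_(mu | is_partition mu) P mu) * (-1) ^+ #|@Uset n| * (-1) ^+ #|@Uset n|).
  by rewrite -mulrA s2 mulr1.
by rewrite -e mulrC mulrA s2 mul1r.
Qed.
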